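(* Let $k>0$ be real and let $\omega_1,\omega_2$ be the two roots of $x^2+x+1$. Put $A=\omega_1k-1$ and $B=\omega_2k-1$. Then for every integer $n\ge1$, $$J_{-n}=\frac{1}{k^2+k+1}\left[k\left(\frac1k\right)^n+\frac{B\omega_1^n-A\omega_2^n}{\omega_1-\omega_2}\right].$$
   Context: For real $k>0$, the third-order $k$-Jacobsthal sequence $(J_n)=(J_n^{(3)}(k))$ is defined by $J_0=0$, $J_1=1$, $J_2=k-1$ and $J_{n+3}=(k-1)J_{n+2}+(k-1)J_{n+1}+kJ_n$, and extended to negative indices by the backward recurrence $J_{-n}=\frac{1-k}{k}J_{-(n-1)}+\frac{1-k}{k}J_{-(n-2)}+\frac{1}{k}J_{-(n-3)}$ for $n\ge1$. *)

(* Defs.v *)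
From HB Require Import structures.
From mathcomp Require Import all_boot all_order all_algebra.
From mathcomp Require Import reals complex.
Set Implicit Arguments. Unset Strict Implicit. Unset Printing Implicit Defensive.
Import Order.TTheory GRing.Theory Num.Theory.
Local Open Scope ring_scope.

Section Jacobsthal.
Variable R : realType.
Variable k : R.

(* Forward: triple (J_n, J_{n+1}, J_{n+2}) for n : nat, via
   J_{n+3} = (k-1) J_{n+2} + (k-1) J_{n+1} + k J_n. *)
Fixpoint Jfwd (n : nat) : R * R * R :=
  match n with
  | O => (0, 1, k - 1)
  | S m => let: (a, b, c) := Jfwd m in (b, c, (k - 1) * c + (k - 1) * b + k * a)
  end.

(* Backward: triple (J_{-n}, J_{-(n-1)}, J_{-(n-2)}) for n : nat, via
   J_{-n} = (1-k)/k J_{-(n-1)} + (1-k)/k J_{-(n-2)} + 1/k J_{-(n-3)}. *)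
Fixpoint Jbwd (n : nat) : R * R * R :=
  match n with
  | O => (0, 1, k - 1)
  | S m => let: (a, b, c) := Jbwd m in
           ((1 - k) / k * a + (1 - k) / k * b + 1 / k * c, a, b)
  end.

Definition J (z : int) : R :=
  match z with
  | Posz n => (Jfwd n).1.1
  | Negz n => (Jbwd n.+1).1.1   (* Negz n = -(n+1) *)
  end.
End Jacobsthal.

(* Main.v *)
Require Import Defs.
From HB Require Import structures.
From mathcomp Require Import all_boot all_order all_algebra.
From mathcomp Require Import reals complex.
From mathcomp Require Import ring.
Import Order.TTheory GRing.Theory Num.Theory.
Local Open Scope ring_scope.
Local Open Scope complex_scope.

Lemma rec_pow (R : realType) (c x : R[i]) (n : nat) : c != 0 ->
  (c * x - 1) * (x ^+ 2 + x + 1) = 0 ->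
  x ^+ (n + 3) = (1 - c) / c * x ^+ (n + 2) + (1 - c) / c * x ^+ (n + 1)
                 + 1 / c * x ^+ n.
Proof.
move=> c0 H; apply/eqP; rewrite -subr_eq0; apply/eqP.
have -> : x ^+ (n + 3) - ((1 - c) / c * x ^+ (n + 2) + (1 - c) / c * x ^+ (n + 1)
                 + 1 / c * x ^+ n) = x ^+ n / c * ((c * x - 1) * (x ^+ 2 + x + 1)).
  by rewrite !exprD; field.
by rewrite H mulr0.
Qed.

Definition fS {R : realType} (k : R) (w1 w2 : R[i]) (n : nat) : R[i] :=
  (k ^+ 2 + k + 1)%:C^-1 *
        ((k * (1 / k) ^+ n)%:C + ((w2 * k%:C - 1) * w1 ^+ n - (w1 * k%:C - 1) * w2 ^+ n) / (w1 - w2)).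

Lemma gen_rec (C : fieldType) (c K D w1 w2 u : C) (n : nat) : c != 0 ->
  (c * u - 1) * (u ^+ 2 + u + 1) = 0 ->
  (c * w1 - 1) * (w1 ^+ 2 + w1 + 1) = 0 ->
  (c * w2 - 1) * (w2 ^+ 2 + w2 + 1) = 0 ->
  let g m := K * (c * u ^+ m + ((w2 * c - 1) * w1 ^+ m - (w1 * c - 1) * w2 ^+ m) * D) in
  g (n + 3)%N = (1 - c) / c * g (n + 2)%N + (1 - c) / c * g (n + 1)%N + 1 / c * g n.
Proof.
move=> c0 hu h1 h2 g; rewrite /g.
have E : forall x : C, (c * x - 1) * (x ^+ 2 + x + 1) = 0 ->
  x ^+ (n + 3) = (1 - c) / c * x ^+ (n + 2) + (1 - c) / c * x ^+ (n + 1)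
                 + 1 / c * x ^+ n.
  move=> x H; apply/eqP; rewrite -subr_eq0; apply/eqP.
  have -> : x ^+ (n + 3) - ((1 - c) / c * x ^+ (n + 2) + (1 - c) / c * x ^+ (n + 1)
                 + 1 / c * x ^+ n) = x ^+ n / c * ((c * x - 1) * (x ^+ 2 + x + 1)).
    by rewrite !exprD; field.
  by rewrite H mulr0.
rewrite (E u hu) (E w1 h1) (E w2 h2).
by field.
Qed.

Lemma fS_rec (R : realType) (k : R) (w1 w2 : R[i]) (n : nat) : 0 < k ->
  root ('X^2 + 'X + 1) w1 -> root ('X^2 + 'X + 1) w2 ->
  fS k w1 w2 (n + 3) = ((1 - k) / k)%:C * fS k w1 w2 (n + 2)
     + ((1 - k) / k)%:C * fS k w1 w2 (n + 1) + (1 / k)%:C * fS k w1 w2 n.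
Proof.
move=> k0 r1 r2.
have c0 : k%:C != 0 by rewrite (fmorph_eq0 (real_complex R)); apply: lt0r_neq0.
rewrite /root !hornerE in r1 r2; move/eqP: r1 => r1; move/eqP: r2 => r2.
have F : forall m, fS k w1 w2 m = (k ^+ 2 + k + 1)%:C^-1 * (k%:C * (k%:C^-1) ^+ m +
   ((w2 * k%:C - 1) * w1 ^+ m - (w1 * k%:C - 1) * w2 ^+ m) * (w1 - w2)^-1).
  move=> m; rewrite /fS; congr (_ * (_ + _)).
  by rewrite rmorphM rmorphXn div1r fmorphV.
have G1 : ((1 - k) / k)%:C = (1 - k%:C) / k%:C by rewrite rmorphM rmorphB rmorph1 fmorphV.
have G2 : (1 / k)%:C = 1 / k%:C by rewrite !div1r fmorphV.
rewrite G1 G2 !F.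
apply: gen_rec => //.
- by field.
- by rewrite r1 mulr0.
- by rewrite r2 mulr0.
Qed.

Lemma fS_claim (R : realType) (k : R) (w1 w2 : R[i]) : 0 < k ->
  root ('X^2 + 'X + 1) w1 -> root ('X^2 + 'X + 1) w2 -> w1 != w2 ->
  forall n, ((Jbwd k n.+2).1.1)%:C = fS k w1 w2 n.+2 /\
            ((Jbwd k n.+2).1.2)%:C = fS k w1 w2 n.+1 /\
            ((Jbwd k n.+2).2)%:C = fS k w1 w2 n.
Proof.
move=> k0 r1 r2 w12.
have kn0 : k != 0 by apply: lt0r_neq0.
have c0 : k%:C != 0 by rewrite (fmorph_eq0 (real_complex R)).
have d0 : w1 - w2 != 0 by rewrite subr_eq0.
have K0 : (k ^+ 2 + k + 1) != 0.
  by apply: lt0r_neq0; rewrite addr_gt0 // addr_gt0 // exprn_gt0.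
have KC : (k ^+ 2 + k + 1)%:C = k%:C ^+ 2 + k%:C + 1.
  by rewrite !rmorphD rmorphXn rmorph1.
have KC0 : k%:C ^+ 2 + k%:C + 1 != 0 by rewrite -KC (fmorph_eq0 (real_complex R)).
have r1' := r1; have r2' := r2.
rewrite /root !hornerE in r1 r2; move/eqP: r1 => r1; move/eqP: r2 => r2.
have hs : w1 + w2 = -1.
  have : (w1 - w2) * (w1 + w2 + 1) = 0.
    by rewrite -[RHS](subrr 0) -{1}r1 -r2; ring.
  move/eqP; rewrite mulf_eq0 (negbTE d0) /= => /eqP H.
  by apply/eqP; rewrite -subr_eq0 opprK; apply/eqP.
have hp : w1 * w2 = 1.
  have -> : w2 = -1 - w1 by rewrite -hs; ring.
  by apply/eqP; rewrite -subr_eq0; apply/eqP; rewrite -[RHS]oppr0 -r1; ring.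
have f0 : fS k w1 w2 0 = 0.
  rewrite /fS !expr0 !mulr1.
  rewrite (_ : (w2 * k%:C - 1) - (w1 * k%:C - 1) = - k%:C * (w1 - w2)); last by ring.
  by rewrite mulfK // subrr mulr0.
have f1 : fS k w1 w2 1 = 0.
  rewrite /fS !expr1 div1r mulfV // rmorph1.
  rewrite (_ : (w2 * k%:C - 1) * w1 - (w1 * k%:C - 1) * w2 = - (w1 - w2)); last first.
    by ring.
  by rewrite mulNr divff // subrr mulr0.
have f2 : fS k w1 w2 2 = (1 / k)%:C.
  rewrite /fS.
  rewrite (_ : (w2 * k%:C - 1) * w1 ^+ 2 - (w1 * k%:C - 1) * w2 ^+ 2
      = (k%:C * (w1 * w2) - (w1 + w2)) * (w1 - w2)); last by ring.
  rewrite hp hs mulfK // (_ : k * (1 / k) ^+ 2 = 1 / k); last by field.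
  rewrite KC !div1r fmorphV; field.
  by rewrite KC0 c0.
elim=> [|n [IH1 [IH2 IH3]]].
  rewrite /=.
  rewrite (_ : (1 - k) / k * 0 + (1 - k) / k * 1 + 1 / k * (k - 1) = 0); last by field.
  by rewrite f2 f1 f0 !mulr0 !add0r mulr1 rmorph0.
have -> : Jbwd k n.+3 = (let: (a, b, c) := Jbwd k n.+2 in
   ((1 - k) / k * a + (1 - k) / k * b + 1 / k * c, a, b)) by [].
move: IH1 IH2 IH3; case: (Jbwd k n.+2) => [[a b] d] /= IH1 IH2 IH3.
split; last by split.
have := @fS_rec _ k w1 w2 n k0 r1' r2'; rewrite !addn3 !addn2 !addn1 => ->.
by rewrite -IH1 -IH2 -IH3 !rmorphD; congr (_ + _ + _); apply: rmorphM.
Qed.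

Theorem mainTheorem9 (R : realType) (k : R) (w1 w2 : R[i]) :
  0 < k ->
  root ('X^2 + 'X + 1) w1 -> root ('X^2 + 'X + 1) w2 -> w1 != w2 ->
  forall n : nat, (1 <= n)%N ->
    let A := w1 * k%:C - 1 in
    let B := w2 * k%:C - 1 in
    (J k (- (n%:Z)))%:C =
      (k ^+ 2 + k + 1)%:C^-1 *
        ((k * (1 / k) ^+ n)%:C + (B * w1 ^+ n - A * w2 ^+ n) / (w1 - w2)).
Proof.
move=> k0 r1 r2 w12 [|n] // _ A B.
rewrite -NegzE /=.
case: n => [|n].
  have [_ [H _]] := @fS_claim _ k w1 w2 k0 r1 r2 w12 0.
  by move: H; rewrite /fS /= => <-.
by have [H _] := @fS_claim _ k w1 w2 k0 r1 r2 w12 n.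
Qed.
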